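(* The path functor $P:\mathsf{RSRel}\to\mathsf{Met}$ is fully faithful and is left adjoint to the functor $Q:\mathsf{Met}\to\mathsf{RSRel}$.
   Context: $\mathsf{RSRel}$: objects are pairs $X=(|X|,\sim_X)$ of a set and a reflexive symmetric relation on it; morphisms are functions $f$ with $x\sim x'\Rightarrow f(x)\sim f(x')$. $\mathsf{Met}$: objects are extended pseudo-metric spaces $(|X|,d)$ with $d:|X|\times|X|\to[0,\infty]$, $d(x,x)=0$, symmetric, satisfying the triangle inequality; morphisms are non-expansive maps ($d(f(x),f(y))\le d(x,y)$). For $X\in\mathsf{RSRel}$, $PX$ is $|X|$ with the path metric: $d(x,x')$ is the least $k$ such that there are $x_0=x,x_1,\dots,x_k=x'$ with $x_i\sim x_{i+1}$ for all $i<k$, and $\infty$ if no such sequence exists; $P$ is the identity on morphisms. For $Y\in\mathsf{Met}$, $QY=(|Y|,\{(y,y'):d(y,y')\le1\})$, and $Q$ is the identity on morphisms. *)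

(* Defs.v *)
From Stdlib Require Import Reals Lra Lia Classical Wf_nat.
From Coquelicot Require Import Rbar Lub.
Open Scope R_scope.

Record RSRel := {
  rs_car :> Type;
  rs_rel : rs_car -> rs_car -> Prop;
  rs_refl : forall x, rs_rel x x;
  rs_sym : forall x y, rs_rel x y -> rs_rel y x }.

Definition RSHom (X Y : RSRel) : Type :=
  { f : X -> Y | forall x x', rs_rel X x x' -> rs_rel Y (f x) (f x') }.

Definition rs_id (X : RSRel) : RSHom X X := exist (fun f : X -> X => forall x x', rs_rel X x x' -> rs_rel X (f x) (f x'))
  (fun x => x) (fun _ _ h => h).

Definition rs_comp {X Y Z : RSRel} (g : RSHom Y Z) (f : RSHom X Y) : RSHom X Z :=
  exist (fun F : X -> Z => forall x x', rs_rel X x x' -> rs_rel Z (F x) (F x'))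
    (fun x => proj1_sig g (proj1_sig f x))
    (fun x x' h => proj2_sig g _ _ (proj2_sig f _ _ h)).

Record Met := {
  met_car :> Type;
  met_d : met_car -> met_car -> Rbar;
  met_nonneg : forall x y, Rbar_le (Finite 0) (met_d x y);
  met_refl : forall x, met_d x x = Finite 0;
  met_sym : forall x y, met_d x y = met_d y x;
  met_tri : forall x y z,
    Rbar_le (met_d x z) (Rbar_plus (met_d x y) (met_d y z)) }.

Definition MetHom (X Y : Met) : Type :=
  { f : X -> Y | forall x y, Rbar_le (met_d Y (f x) (f y)) (met_d X x y) }.

Definition met_id (X : Met) : MetHom X X :=
  exist (fun f : X -> X => forall x y, Rbar_le (met_d X (f x) (f y)) (met_d X x y))
    (fun x => x) (fun x y => Rbar_le_refl _).

Definition met_comp {X Y Z : Met} (g : MetHom Y Z) (f : MetHom X Y) : MetHom X Z :=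
  exist (fun F : X -> Z => forall x y, Rbar_le (met_d Z (F x) (F y)) (met_d X x y))
    (fun x => proj1_sig g (proj1_sig f x))
    (fun x y => Rbar_le_trans _ _ _ (proj2_sig g _ _) (proj2_sig f _ _)).

Definition walk (X : RSRel) (x x' : X) (k : nat) : Prop :=
  exists s : nat -> X, s 0%nat = x /\ s k = x' /\
    (forall i, (i < k)%nat -> rs_rel X (s i) (s (S i))).

(* d(x,x') = least k admitting such a sequence (infimum of the set of such k),
   and +oo if there is none (the infimum of the empty set is +oo). *)
Definition pathd (X : RSRel) (x x' : X) : Rbar :=
  Glb_Rbar (fun r => exists k, r = INR k /\ walk X x x' k).

Lemma walk_min (X : RSRel) (x y : X) :
  (exists k, walk X x y k) ->
  exists m, walk X x y m /\ forall k, walk X x y k -> (m <= k)%nat.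
Proof.
  intros H.
  destruct (dec_inh_nat_subset_has_unique_least_element (walk X x y)
              (fun n => classic _) H) as [m [[Hm Hl] _]].
  exists m; split; auto.
Qed.

Lemma pathd_min (X : RSRel) (x y : X) m :
  walk X x y m -> (forall k, walk X x y k -> (m <= k)%nat) ->
  pathd X x y = Finite (INR m).
Proof.
  intros Hm Hl. unfold pathd. apply is_glb_Rbar_unique. split.
  - intros r [k [-> Hk]]. simpl. apply le_INR. auto.
  - intros b Hb. apply Hb. exists m; auto.
Qed.

Lemma pathd_none (X : RSRel) (x y : X) :
  ~ (exists k, walk X x y k) -> pathd X x y = p_infty.
Proof.
  intros Hn. unfold pathd. apply is_glb_Rbar_unique. split.
  - intros r [k [_ Hk]]. exfalso; eauto.
  - intros b _. destruct b; simpl; auto.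
Qed.

Lemma walk_refl (X : RSRel) (x : X) : walk X x x 0.
Proof. exists (fun _ => x). repeat split; auto. intros; lia. Qed.

Lemma walk_sym (X : RSRel) (x y : X) k : walk X x y k -> walk X y x k.
Proof.
  intros [s [H0 [Hk Hs]]]. exists (fun i => s (k - i)%nat). repeat split.
  - rewrite Nat.sub_0_r; auto.
  - rewrite Nat.sub_diag; auto.
  - intros i Hi. apply rs_sym.
    replace (k - i)%nat with (S (k - S i)) by lia. apply Hs. lia.
Qed.

Lemma walk_cat (X : RSRel) (x y z : X) k1 k2 :
  walk X x y k1 -> walk X y z k2 -> walk X x z (k1 + k2).
Proof.
  intros [s [H0 [Hk Hs]]] [t [T0 [Tk Ht]]].
  exists (fun i => if Nat.leb i k1 then s i else t (i - k1)%nat). repeat split.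
  - simpl. auto.
  - destruct (Nat.leb (k1 + k2) k1) eqn:E.
    + apply Nat.leb_le in E. assert (k2 = 0%nat) by lia. subst.
      rewrite Nat.add_0_r. congruence.
    + replace (k1 + k2 - k1)%nat with k2 by lia. auto.
  - intros i Hi.
    destruct (Nat.leb i k1) eqn:E1; destruct (Nat.leb (S i) k1) eqn:E2.
    + apply Hs. apply Nat.leb_le in E2. lia.
    + apply Nat.leb_le in E1. apply Nat.leb_gt in E2.
      assert (i = k1) by lia. subst i. rewrite Hk, <- T0.
      replace (S k1 - k1)%nat with 1%nat by lia. apply (Ht 0%nat). lia.
    + apply Nat.leb_gt in E1. apply Nat.leb_le in E2. lia.
    + apply Nat.leb_gt in E1.
      replace (S i - k1)%nat with (S (i - k1)) by lia. apply Ht. lia.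
Qed.

Lemma walk_map (X Y : RSRel) (f : X -> Y)
  (hf : forall x x', rs_rel X x x' -> rs_rel Y (f x) (f x')) x y k :
  walk X x y k -> walk Y (f x) (f y) k.
Proof.
  intros [s [H0 [Hk Hs]]]. exists (fun i => f (s i)). repeat split; try congruence.
  intros i Hi. apply hf, Hs; auto.
Qed.

Lemma pathd_nonneg (X : RSRel) (x y : X) : Rbar_le (Finite 0) (pathd X x y).
Proof.
  destruct (classic (exists k, walk X x y k)) as [H|H].
  - destruct (walk_min X x y H) as [m [Hm Hl]]. rewrite (pathd_min X x y m Hm Hl).
    simpl. apply pos_INR.
  - rewrite pathd_none; simpl; auto.
Qed.

Lemma pathd_refl (X : RSRel) (x : X) : pathd X x x = Finite 0.
Proof.
  rewrite (pathd_min X x x 0%nat (walk_refl X x)); auto. intros; lia.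
Qed.

Lemma pathd_sym (X : RSRel) (x y : X) : pathd X x y = pathd X y x.
Proof.
  destruct (classic (exists k, walk X x y k)) as [H|H].
  - destruct (walk_min X x y H) as [m [Hm Hl]]. rewrite (pathd_min X x y m Hm Hl).
    symmetry. apply pathd_min.
    + apply walk_sym; auto.
    + intros k Hk. apply Hl, walk_sym; auto.
  - rewrite (pathd_none X x y H). symmetry. apply pathd_none.
    intros [k Hk]. apply H. exists k. apply walk_sym; auto.
Qed.

Lemma pathd_tri (X : RSRel) (x y z : X) :
  Rbar_le (pathd X x z) (Rbar_plus (pathd X x y) (pathd X y z)).
Proof.
  destruct (classic (exists k, walk X x y k)) as [H1|H1].
  - destruct (classic (exists k, walk X y z k)) as [H2|H2].
    + destruct (walk_min X x y H1) as [m1 [Hm1 Hl1]].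
      destruct (walk_min X y z H2) as [m2 [Hm2 Hl2]].
      rewrite (pathd_min X x y m1 Hm1 Hl1), (pathd_min X y z m2 Hm2 Hl2).
      assert (W : walk X x z (m1 + m2)) by (eapply walk_cat; eauto).
      destruct (walk_min X x z (ex_intro _ _ W)) as [m3 [Hm3 Hl3]].
      rewrite (pathd_min X x z m3 Hm3 Hl3). simpl.
      rewrite <- plus_INR. apply le_INR. auto.
    + rewrite (pathd_none X y z H2).
      pose proof (pathd_nonneg X x y).
      destruct (pathd X x y); simpl in *; try contradiction;
      destruct (pathd X x z); simpl; auto.
  - rewrite (pathd_none X x y H1).
    pose proof (pathd_nonneg X y z).
    destruct (pathd X y z); simpl in *; try contradiction;
    destruct (pathd X x z); simpl; auto.
Qed.

Definition P_obj (X : RSRel) : Met :=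
  {| met_car := rs_car X; met_d := pathd X;
     met_nonneg := pathd_nonneg X; met_refl := pathd_refl X;
     met_sym := pathd_sym X; met_tri := pathd_tri X |}.

Lemma rs_nonexpansive (X Y : RSRel) (f : RSHom X Y) :
  forall x y, Rbar_le (pathd Y (proj1_sig f x) (proj1_sig f y)) (pathd X x y).
Proof.
  intros x y.
  destruct (classic (exists k, walk X x y k)) as [H|H].
  - destruct (walk_min X x y H) as [m [Hm Hl]]. rewrite (pathd_min X x y m Hm Hl).
    pose proof (walk_map X Y _ (proj2_sig f) x y m Hm) as W.
    destruct (walk_min Y _ _ (ex_intro _ _ W)) as [m' [Hm' Hl']].
    rewrite (pathd_min Y _ _ m' Hm' Hl'). simpl. apply le_INR. auto.
  - rewrite (pathd_none X x y H). destruct (pathd Y _ _); simpl; auto.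
Qed.

Definition P_mor {X Y : RSRel} (f : RSHom X Y) : MetHom (P_obj X) (P_obj Y) :=
  exist (fun F : P_obj X -> P_obj Y =>
           forall x y, Rbar_le (met_d (P_obj Y) (F x) (F y)) (met_d (P_obj X) x y))
    (proj1_sig f) (rs_nonexpansive X Y f).

Definition Q_rel (Y : Met) (y y' : Y) : Prop := Rbar_le (met_d Y y y') (Finite 1).

Lemma Q_rel_refl (Y : Met) (y : Y) : Q_rel Y y y.
Proof. unfold Q_rel. rewrite met_refl. simpl. lra. Qed.

Lemma Q_rel_sym (Y : Met) (y y' : Y) : Q_rel Y y y' -> Q_rel Y y' y.
Proof. unfold Q_rel. rewrite met_sym. auto. Qed.

Definition Q_obj (Y : Met) : RSRel :=
  {| rs_car := met_car Y; rs_rel := Q_rel Y;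
     rs_refl := Q_rel_refl Y; rs_sym := Q_rel_sym Y |}.

Definition Q_mor {Y Y' : Met} (g : MetHom Y Y') : RSHom (Q_obj Y) (Q_obj Y') :=
  exist (fun F : Q_obj Y -> Q_obj Y' =>
           forall y y', rs_rel (Q_obj Y) y y' -> rs_rel (Q_obj Y') (F y) (F y'))
    (proj1_sig g) (fun y y' h => Rbar_le_trans _ _ _ (proj2_sig g y y') h).

(* Main.v *)
Require Import Defs.
From Stdlib Require Import Reals.
From Coquelicot Require Import Rbar.
From Stdlib Require Import Lra Lia Classical ProofIrrelevance.

Lemma sig_ext {A : Type} {P : A -> Prop} (a b : sig P) :
  proj1_sig a = proj1_sig b -> a = b.
Proof.
  destruct a as [a pa], b as [b pb]; simpl; intros ->.
  f_equal; apply proof_irrelevance.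
Qed.

Lemma pathd_le_walk (X : RSRel) (x y : X) k :
  walk X x y k -> Rbar_le (pathd X x y) (Finite (INR k)).
Proof.
  intros W. destruct (walk_min X x y (ex_intro _ _ W)) as [m [Hm Hl]].
  rewrite (pathd_min X x y m Hm Hl). simpl. apply le_INR. auto.
Qed.

Lemma pathd_rel (X : RSRel) (x y : X) : rs_rel X x y -> Rbar_le (pathd X x y) (Finite 1).
Proof.
  intros H. replace 1 with (INR 1) by (simpl; auto).
  apply pathd_le_walk. exists (fun i => match i with 0%nat => x | _ => y end).
  repeat split. intros i Hi. assert (i = 0%nat) by lia. subst. auto.
Qed.

Lemma pathd_le1 (X : RSRel) (x y : X) : Rbar_le (pathd X x y) (Finite 1) -> rs_rel X x y.
Proof.
  intros H. destruct (classic (exists k, walk X x y k)) as [E|E].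
  - destruct (walk_min X x y E) as [m [Hm Hl]].
    rewrite (pathd_min X x y m Hm Hl) in H. simpl in H.
    assert (Hm1 : (m <= 1)%nat). { apply INR_le. simpl. auto. }
    destruct Hm as [s [Hs0 [Hk Hs]]].
    destruct m as [|[|m]].
    + subst. apply rs_refl.
    + subst. apply Hs. lia.
    + lia.
  - rewrite (pathd_none X x y E) in H. simpl in H. contradiction.
Qed.

Lemma Rbar_plus_le_fin a b r r' :
  Rbar_le a (Finite r) -> Rbar_le b (Finite r') -> Rbar_le (Rbar_plus a b) (Finite (r + r')).
Proof.
  destruct a, b; simpl; intros; try contradiction; try lra; auto.
Qed.

Lemma bound_pathd (X : RSRel) (Y : Met) (F : X -> Y)
  (hF : forall x x', rs_rel X x x' -> Rbar_le (met_d Y (F x) (F x')) (Finite 1)) :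
  forall x y, Rbar_le (met_d Y (F x) (F y)) (pathd X x y).
Proof.
  intros x y. destruct (classic (exists k, walk X x y k)) as [E|E].
  - destruct (walk_min X x y E) as [m [Hm Hl]].
    rewrite (pathd_min X x y m Hm Hl).
    destruct Hm as [s [H0 [Hk Hs]]].
    assert (G : forall i, (i <= m)%nat -> Rbar_le (met_d Y (F (s 0%nat)) (F (s i))) (Finite (INR i))).
    { induction i; intros Hi.
      - rewrite met_refl. simpl. lra.
      - eapply Rbar_le_trans. apply met_tri with (y := F (s i)).
        rewrite S_INR. apply Rbar_plus_le_fin.
        + apply IHi. lia.
        + apply hF, Hs. lia. }
    subst. apply G. lia.
  - rewrite (pathd_none X x y E). destruct (met_d Y _ _); simpl; auto.
Qed.

Theorem theorem5 :
  (forall (X Y : RSRel),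
     (forall f g : RSHom X Y, P_mor f = P_mor g -> f = g) /\
     (forall h : MetHom (P_obj X) (P_obj Y), exists f : RSHom X Y, P_mor f = h)) /\
  (exists phi : forall (X : RSRel) (Y : Met), MetHom (P_obj X) Y -> RSHom X (Q_obj Y),
     (forall X Y,
        (forall f g, phi X Y f = phi X Y g -> f = g) /\
        (forall h : RSHom X (Q_obj Y), exists f, phi X Y f = h)) /\
     (forall (X' X : RSRel) (Y Y' : Met)
             (h : RSHom X' X) (g : MetHom Y Y') (f : MetHom (P_obj X) Y),
        phi X' Y' (met_comp g (met_comp f (P_mor h)))
        = rs_comp (Q_mor g) (rs_comp (phi X Y f) h))).
Proof.
  split.
  - intros X Y. split.
    + intros f g E. apply sig_ext. apply (f_equal (@proj1_sig _ _)) in E. exact E.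
    + intros h.
      unshelve eexists (exist _ (proj1_sig h) _).
      * intros x x' R. apply pathd_le1.
        eapply Rbar_le_trans. apply (proj2_sig h). apply pathd_rel. exact R.
      * apply sig_ext. reflexivity.
  - unshelve eexists.
    + intros X Y f. exists (proj1_sig f).
      intros x x' R. simpl. unfold Q_rel.
      eapply Rbar_le_trans. apply (proj2_sig f). apply pathd_rel. exact R.
    + split.
      * intros X Y. split.
        -- intros f g E. apply sig_ext. apply (f_equal (@proj1_sig _ _)) in E. exact E.
        -- intros h. unshelve eexists (exist _ (proj1_sig h) _).
           ++ exact (bound_pathd X Y (proj1_sig h) (fun x x' R => proj2_sig h x x' R)). 
           ++ apply sig_ext. reflexivity.
      * intros. apply sig_ext. reflexivity.
Qed.
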